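(* Let $G$ be a group, $\mathcal F\subset\mathcal P_G$ a left-invariant lower family, $A\subset G$, and $\alpha$ an ordinal. Then $A\in\tau^\alpha(\mathcal F)$ if and only if the $\tau$-tree $T_A$ is well-founded and $\mathrm{rank}(T_A)\le\alpha$ when $\alpha<\omega$, respectively $\mathrm{rank}(T_A)\le\alpha+1$ when $\alpha\ge\omega$.
   Context: $e$ is the neutral element of $G$, $G_\circ=G\setminus\{e\}$. $G_\circ^{<\omega}=\bigcup_{n\in\omega}G_\circ^n$ is the tree of finite sequences, ordered by $s\le t$ iff $s$ is an initial segment of $t$; for $s\in G_\circ^{<\omega}$ and $x\in G_\circ$, $s\hat{\ }x$ is the sequence $s$ extended by $x$. For $A\subset G$ define $A_\emptyset=A$ and $A_{s\hat{\ }x}=A_s\cap xA_s$; thus $A_{(g_0,\dots,g_n)}=\bigcap_{k_0,\dots,k_n\in\{0,1\}}g_n^{k_n}\cdots g_0^{k_0}A$. The $\tau$-tree of $A$ is $T_A=\{s\in G_\circ^{<\omega}: A_s\notin\mathcal F\}$ (a lower subtree). A poset $X$ is well-founded if every nonempty subset has a maximal element; then $\mathrm{rank}_X(x)=\sup\{\mathrm{rank}_X(y)+1: y>x\}$ ($\sup\emptyset=0$), and $\mathrm{rank}(X)=\sup\{\mathrm{rank}_X(x)+1:x\in X\}$ for $X\neq\emptyset$, $\mathrm{rank}(\emptyset)=0$. For a left-invariant lower $\mathcal F$ ($xF\in\mathcal F$ for $F\in\mathcal F$, $x\in G$; closed under subsets): $\tau(\mathcal F)=\{A: xA\cap yA\in\mathcal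 F$ for all distinct $x,y\in G\}$, $\tau^0(\mathcal F)=\mathcal F$, $\tau^{<\alpha}(\mathcal F)=\bigcup_{\beta<\alpha}\tau^\beta(\mathcal F)$, $\tau^\alpha(\mathcal F)=\tau(\tau^{<\alpha}(\mathcal F))$ for $\alpha>0$. *)

(* Defs.v *)
From Stdlib Require Import List.
Import ListNotations.
Set Implicit Arguments.

Record group := Group {
  carrier :> Type;
  gmul : carrier -> carrier -> carrier;
  gone : carrier;
  ginv : carrier -> carrier;
  gmulA : forall x y z, gmul x (gmul y z) = gmul (gmul x y) z;
  gmul1 : forall x, gmul gone x = x;
  gmulV : forall x, gmul (ginv x) x = gone
}.

Definition gset (G : group) := G -> Prop.
Definition family (G : group) := gset G -> Prop.

(** Left translate xA = { x a : a in A }. *)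
Definition translate (G : group) (x : G) (A : gset G) : gset G :=
  fun g => A (gmul G (ginv G x) g).

Definition inter (G : group) (A B : gset G) : gset G := fun g => A g /\ B g.

Definition subset (G : group) (A B : gset G) : Prop := forall g, A g -> B g.

Definition left_invariant (G : group) (F : family G) : Prop :=
  forall B x, F B -> F (translate x B).
Definition lower (G : group) (F : family G) : Prop :=
  forall B C, F B -> subset C B -> F C.

Definition tau (G : group) (H : family G) : family G :=
  fun A => forall x y : G, x <> y -> H (inter (translate x A) (translate y A)).

(** * Ordinals, represented as elements of well-ordered types *)
Record wellorder := WellOrder {
  ocarrier :> Type;
  olt : ocarrier -> ocarrier -> Prop;
  olt_wf : well_founded olt;
  olt_trans : forall a b c, olt a b -> olt b c -> olt a c;
  olt_total : forall a b, olt a b \/ a = b \/ olt b a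
}.

(** alpha < omega : alpha has finitely many predecessors. *)
Definition finite_ord (O : wellorder) (a : O) : Prop :=
  exists l : list O, forall b, olt O b a -> In b l.

(** Transfinite iteration: tau^0(F) = F,
    tau^a(F) = tau(tau^{<a}(F)) for a > 0, where tau^{<a}(F) = U_{b<a} tau^b(F).
    Defined as the (unique) solution of this well-founded recursion, written
    as an inductive predicate whose constructors are the unfolded equations. *)
Inductive tau_iter (G : group) (F : family G) (O : wellorder) : O -> gset G -> Prop :=
| tau_iter_zero : forall a A,
    (forall b, ~ olt O b a) -> F A -> tau_iter F O a A
| tau_iter_pos : forall a A,
    (exists b, olt O b a) ->
    (forall x y : G, x <> y ->
       exists b, olt O b a /\
         tau_iter F O b (inter (translate x A) (translate y A))) ->
    tau_iter F O a A.

(** A_s, with A_[] = A and A_{s^x} = A_s ∩ x A_s (s listed from g_0 on). *)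
Definition Aseq (G : group) (A : gset G) (s : list G) : gset G :=
  fold_left (fun B x => inter B (translate x B)) s A.

Definition tau_tree (G : group) (F : family G) (A : gset G) : list G -> Prop :=
  fun s => Forall (fun x => x <> gone G) s /\ ~ F (Aseq A s).

Definition prefix (T : Type) (s t : list T) : Prop := exists u, t = s ++ u.
Definition sprefix (T : Type) (s t : list T) : Prop := prefix s t /\ s <> t.

Definition wf_poset (T : Type) (X : list T -> Prop) : Prop :=
  forall S : list T -> Prop, (forall s, S s -> X s) -> (exists s, S s) ->
    exists m, S m /\ forall y, S y -> ~ sprefix m y.

(** rank_X(x) <= b, unfolding rank_X(x) = sup{ rank_X(y)+1 : y > x, y in X }:
    rank_X(x) <= b  iff  for all y > x in X, rank_X(y) < b, i.e.
    rank_X(y) <= c for some c < b. *)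
Inductive rank_le (T : Type) (X : list T -> Prop) (O : wellorder) : list T -> O -> Prop :=
| rank_le_intro : forall x b,
    (forall y, X y -> sprefix x y -> exists c, olt O c b /\ rank_le X O y c) ->
    rank_le X O x b.

(** rank(X) = sup{ rank_X(x)+1 : x in X } <= a  iff  rank_X(x) < a for all x. *)
Definition rank_poset_le (T : Type) (X : list T -> Prop) (O : wellorder) (a : O) : Prop :=
  forall x, X x -> exists c, olt O c a /\ rank_le X O x c.

(** rank(X) <= a+1  iff  rank_X(x) <= a for all x in X. *)
Definition rank_poset_le_succ (T : Type) (X : list T -> Prop) (O : wellorder) (a : O) : Prop :=
  forall x, X x -> rank_le X O x a.

(* Main.v *)
Require Import Defs.
From Stdlib Require Import List Classical.
Import ListNotations.

Lemma g_mulVr (G : group) (x : G) : gmul G x (ginv G x) = gone G.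
Proof.
  set (y := ginv G x).
  rewrite <- (gmul1 G (gmul G x y)).
  rewrite <- (gmulV G y) at 1.
  rewrite <- gmulA. rewrite (gmulA G y x y). unfold y at 2. rewrite gmulV, gmul1.
  apply gmulV.
Qed.

Lemma g_mul1r (G : group) (x : G) : gmul G x (gone G) = x.
Proof. rewrite <- (gmulV G x), gmulA, g_mulVr, gmul1. reflexivity. Qed.

Lemma g_cancel (G : group) (x y z : G) : gmul G x y = gmul G x z -> y = z.
Proof.
  intro H. rewrite <- (gmul1 G y), <- (gmul1 G z), <- (gmulV G x), <- !gmulA, H.
  reflexivity.
Qed.

Lemma g_invM (G : group) (x y : G) : ginv G (gmul G x y) = gmul G (ginv G y) (ginv G x).
Proof.
  apply (g_cancel G (gmul G x y)). rewrite g_mulVr.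
  rewrite gmulA, <- (gmulA G x y (ginv G y)), g_mulVr, g_mul1r, g_mulVr. reflexivity.
Qed.

Lemma g_inv1 (G : group) : ginv G (gone G) = gone G.
Proof. rewrite <- (gmul1 G (ginv G (gone G))). apply g_mulVr. Qed.

Lemma tr_one (G : group) (A : gset G) g : translate (gone G) A g <-> A g.
Proof. unfold translate. rewrite g_inv1, gmul1. tauto. Qed.

Lemma tr_tr (G : group) (x w : G) (B : gset G) g :
  translate x (translate w B) g <-> translate (gmul G x w) B g.
Proof. unfold translate. rewrite g_invM, gmulA. tauto. Qed.

Lemma tau_iter_props (G : group) (F : family G)
    (HFinv : left_invariant F) (HFlow : lower F) (O : wellorder) :
  forall b, lower (tau_iter F O b) /\ left_invariant (tau_iter F O b).
Proof.
  intro b. induction b as [b IH] using (well_founded_ind (olt_wf O)).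
  assert (Hlow : lower (tau_iter F O b)).
  { intros B C HB HCB. inversion HB; subst.
    - apply tau_iter_zero; auto. apply (HFlow _ _ H0 HCB).
    - apply tau_iter_pos; auto. intros x y Hxy.
      destruct (H0 x y Hxy) as [c [Hc Hi]]. exists c; split; auto.
      apply (proj1 (IH c Hc) _ _ Hi). intros g [H1 H2]; split; apply HCB; auto. }
  split; auto.
  intros B w HB. inversion HB; subst.
  - apply tau_iter_zero; auto.
  - apply tau_iter_pos; auto. intros x y Hxy.
    assert (Hne : gmul G x w <> gmul G y w).
    { intro E. apply Hxy.
      rewrite <- (g_mul1r G x), <- (g_mul1r G y), <- (g_mulVr G w), !gmulA, E.
      reflexivity. }
    destruct (H0 _ _ Hne) as [c [Hc Hi]]. exists c; split; auto.
    apply (proj1 (IH c Hc) _ _ Hi). intros g [H1 H2]; split; apply tr_tr; auto.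
Qed.

Lemma tau_reduce (G : group) (H : family G) (Hl : lower H) (Hi : left_invariant H)
    (A : gset G) :
  (forall x y : G, x <> y -> H (inter (translate x A) (translate y A))) <->
  (forall z, z <> gone G -> H (inter A (translate z A))).
Proof.
  split.
  - intros Hxy z Hz. apply (Hl _ _ (Hxy (gone G) z (fun e => Hz (eq_sym e)))).
    intros g [H1 H2]. split; auto. apply tr_one; auto.
  - intros Hz x y Hxy.
    assert (Hne : gmul G (ginv G x) y <> gone G).
    { intro E. apply Hxy. rewrite <- (gmul1 G y), <- (g_mulVr G x), <- gmulA, E, g_mul1r.
      reflexivity. }
    pose proof (Hi _ x (Hz _ Hne)) as Ht. apply (Hl _ _ Ht).
    intros g [H1 H2]. unfold translate, inter in *. split; auto.
    rewrite g_invM, <- gmulA, (gmulA G (ginv G (ginv G x)) (ginv G x) g), gmulV, gmul1.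
    exact H2.
Qed.

Definition Az {G : group} (A : gset G) (z : G) : gset G := inter A (translate z A).

Lemma Aseq_sub (G : group) (s : list G) : forall A : gset G, subset (Aseq A s) A.
Proof.
  unfold Aseq. induction s as [|a s IH]; intros A g H; [exact H|].
  simpl in H. apply IH in H. exact (proj1 H).
Qed.

Lemma tree_nil (G : group) (F : family G) (A : gset G) : tau_tree F A [] <-> ~ F A.
Proof. split; [intros [_ H]; exact H | intro H; split; [constructor | exact H]]. Qed.

Lemma tree_root (G : group) (F : family G) (HFlow : lower F) (A : gset G) s :
  tau_tree F A s -> tau_tree F A [].
Proof.
  intros [_ Hn]. apply tree_nil. intro HA. apply Hn. exact (HFlow _ _ HA (Aseq_sub G s A)).
Qed.

Lemma tree_empty (G : group) (F : family G) (HFlow : lower F) (A : gset G) s :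
  F A -> ~ tau_tree F A s.
Proof. intros HA Hs. apply (tree_root G F HFlow) in Hs. apply tree_nil in Hs. auto. Qed.

Lemma tree_cons (G : group) (F : family G) (A : gset G) z s :
  tau_tree F A (z :: s) <-> z <> gone G /\ tau_tree F (Az A z) s.
Proof.
  unfold tau_tree. rewrite Forall_cons_iff.
  change (Aseq A (z :: s)) with (Aseq (Az A z) s). tauto.
Qed.

Lemma sp_nil (T : Type) (y : list T) : sprefix [] y <-> y <> [].
Proof.
  split; [intros [_ H]; auto | intro H; split; [exists y; reflexivity | auto]].
Qed.

Lemma sp_cons (T : Type) (z : T) s y : sprefix (z :: s) y ->
  exists y', y = z :: y' /\ sprefix s y'.
Proof.
  intros [[u Hu] Hne]. subst y. exists (s ++ u). split; [reflexivity|].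
  split; [exists u; reflexivity|]. intro E. apply Hne. simpl. rewrite <- E. reflexivity.
Qed.

Lemma sp_cons2 (T : Type) (z : T) s y : sprefix s y -> sprefix (z :: s) (z :: y).
Proof.
  intros [[u Hu] Hne]. subst y. split; [exists u; reflexivity|].
  intro E. injection E. auto.
Qed.

Lemma rk_unfold (T : Type) (X : list T -> Prop) (O : wellorder) x b :
  rank_le X O x b <->
  (forall y, X y -> sprefix x y -> exists c, olt O c b /\ rank_le X O y c).
Proof. split; [intro H; inversion H; auto | apply rank_le_intro]. Qed.

Lemma rk_mono (T : Type) (X : list T -> Prop) (O : wellorder) x c b :
  rank_le X O x c -> olt O c b -> rank_le X O x b.
Proof.
  intros H Hcb. rewrite rk_unfold in *. intros y Hy Hsp.
  destruct (H y Hy Hsp) as [d [Hd Hr]]. exists d; split; auto. eapply olt_trans; eauto.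
Qed.

Lemma rk_transfer (G : group) (F : family G) (A : gset G) (O : wellorder) z :
  z <> gone G -> forall b s,
  rank_le (tau_tree F A) O (z :: s) b <-> rank_le (tau_tree F (Az A z)) O s b.
Proof.
  intros Hz b. induction b as [b IH] using (well_founded_ind (olt_wf O)). intro s.
  rewrite !rk_unfold. split.
  - intros H y Hy Hsp.
    destruct (H (z :: y) (proj2 (tree_cons G F A z y) (conj Hz Hy)) (sp_cons2 _ z _ _ Hsp))
      as [c [Hc Hr]].
    exists c; split; auto. apply (IH c Hc); auto.
  - intros H y Hy Hsp. destruct (sp_cons _ _ _ _ Hsp) as [y' [-> Hsp']].
    apply tree_cons in Hy as [_ Hy].
    destruct (H y' Hy Hsp') as [c [Hc Hr]]. exists c; split; auto. apply IH; auto.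
Qed.

Lemma S_Q (T : Type) (X : list T -> Prop) (O : wellorder) c b :
  rank_poset_le_succ X O c -> olt O c b -> rank_poset_le X O b.
Proof. intros H Hc x Hx. exists c; auto. Qed.

Lemma S_mono (T : Type) (X : list T -> Prop) (O : wellorder) c b :
  rank_poset_le_succ X O c -> olt O c b -> rank_poset_le_succ X O b.
Proof. intros H Hc x Hx. eapply rk_mono; eauto. Qed.

Lemma Q_mono (T : Type) (X : list T -> Prop) (O : wellorder) b n :
  rank_poset_le X O b -> (b = n \/ olt O b n) -> rank_poset_le X O n.
Proof.
  intros H [<- | Hbn]; auto. intros x Hx. destruct (H x Hx) as [c [Hc Hr]].
  exists c; split; auto. eapply olt_trans; eauto.
Qed.

Lemma rk_down (T : Type) (X : list T -> Prop) (O : wellorder) c :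
  rank_le X O [] c -> rank_poset_le_succ X O c.
Proof.
  intros H x Hx. destruct x as [|a x]; auto.
  pose proof H as H'. rewrite rk_unfold in H'.
  destruct (H' (a :: x) Hx (proj2 (sp_nil _ (a :: x)) ltac:(discriminate))) as [d [Hd Hr]].
  eapply rk_mono; eauto.
Qed.

Lemma L1 (G : group) (F : family G) (HFlow : lower F) (A : gset G) (O : wellorder) b :
  rank_poset_le_succ (tau_tree F A) O b <->
  (forall z, z <> gone G -> rank_poset_le (tau_tree F (Az A z)) O b).
Proof.
  split.
  - intros HS z Hz s Hs.
    assert (Hzs : tau_tree F A (z :: s)) by (apply tree_cons; auto).
    pose proof (HS [] (tree_root G F HFlow A _ Hzs)) as Hr. rewrite rk_unfold in Hr.
    destruct (Hr (z :: s) Hzs (proj2 (sp_nil _ (z :: s)) ltac:(discriminate))) as [c [Hc Hr']].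
    exists c; split; auto. apply rk_transfer; auto.
  - intros H x Hx. destruct x as [|z s].
    + rewrite rk_unfold. intros y Hy Hsp. destruct y as [|z s].
      * apply sp_nil in Hsp. congruence.
      * apply tree_cons in Hy as [Hz Hs]. destruct (H z Hz s Hs) as [c [Hc Hr]].
        exists c; split; auto. apply rk_transfer; auto.
    + apply tree_cons in Hx as [Hz Hs]. destruct (H z Hz s Hs) as [c [Hc Hr]].
      apply rk_mono with c; auto. apply rk_transfer; auto.
Qed.

Lemma olt_irrefl (O : wellorder) (a : O) : ~ olt O a a.
Proof.
  induction (olt_wf O a) as [a _ IH]. intro H. exact (IH a H H).
Qed.

Lemma wf_min (O : wellorder) (P : O -> Prop) :
  (exists x, P x) -> exists m, P m /\ forall y, P y -> ~ olt O y m.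
Proof.
  intros [x Hx]. apply NNPP. intro Hno. revert Hx.
  induction x as [x IH] using (well_founded_ind (olt_wf O)). intro Px.
  apply Hno. exists x. split; auto. intros y Py Hyx. exact (IH y Hyx Py).
Qed.

Lemma finite_pred (O : wellorder) (a b : O) :
  finite_ord O a -> olt O b a -> finite_ord O b.
Proof.
  intros [l Hl] Hba. exists l. intros c Hc. apply Hl. eapply olt_trans; eauto.
Qed.

Lemma list_max (O : wellorder) (l : list O) : forall P : O -> Prop,
  (exists x, P x) -> (forall x, P x -> In x l) ->
  exists m, P m /\ forall c, P c -> c = m \/ olt O c m.
Proof.
  induction l as [|a l IHl]; intros P [x Hx] Hin.
  - destruct (Hin x Hx).
  - destruct (classic (exists x, P x /\ x <> a)) as [Hex | Hno].
    + destruct (IHl (fun x => P x /\ x <> a) Hex) as [m [[Pm Hma] Hm]].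
      { intros y [Py Hya]. destruct (Hin y Py); [congruence | auto]. }
      destruct (classic (P a)) as [Pa | nPa].
      * destruct (olt_total O a m) as [Ham | [Ham | Hma']].
        -- exists m. split; auto. intros c Pc.
           destruct (classic (c = a)) as [-> | Hca]; [right; auto | apply Hm; auto].
        -- congruence.
        -- exists a. split; auto. intros c Pc.
           destruct (classic (c = a)) as [-> | Hca]; [left; auto|].
           destruct (Hm c (conj Pc Hca)) as [-> | Hcm]; right; [auto | eapply olt_trans; eauto].
      * exists m. split; auto. intros c Pc. apply Hm. split; auto. intro; subst; contradiction.
    + assert (Ea : forall y, P y -> y = a).
      { intros y Py. apply NNPP. intro Hya. apply Hno. exists y; auto. }
      exists a. split; [rewrite <- (Ea x Hx); auto|]. intros c Pc. left; auto.
Qed.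

Lemma max_pred (O : wellorder) (a : O) :
  finite_ord O a -> (exists b, olt O b a) ->
  exists n, olt O n a /\ forall c, olt O c a -> c = n \/ olt O c n.
Proof. intros [l Hl] Hex. apply (list_max O l); auto. Qed.

Lemma next_above (O : wellorder) (c a : O) :
  finite_ord O c -> olt O c a -> ~ finite_ord O a -> exists b, olt O c b /\ olt O b a.
Proof.
  intros [lc Hlc] Hca Hinf.
  destruct (wf_min O (fun d => olt O c d)) as [m [Hcm Hmin]]; [eauto|].
  destruct (olt_total O m a) as [Hma | [-> | Ham]].
  - eauto.
  - exfalso. apply Hinf. exists (c :: lc). intros d Hd.
    destruct (olt_total O d c) as [Hdc | [-> | Hcd]].
    + right; auto.
    + left; auto.
    + exfalso. exact (Hmin d Hcd Hd).
  - exfalso. exact (Hmin a Hca Ham).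
Qed.

Lemma wf_from_rank (T : Type) (X : list T -> Prop) (O : wellorder) :
  (forall x, X x -> exists c, rank_le X O x c) -> wf_poset X.
Proof.
  intros H S HSX [s0 Hs0].
  destruct (wf_min O (fun c => exists s, S s /\ rank_le X O s c)) as [c0 [[m [Sm Hm]] Hmin]].
  { destruct (H s0 (HSX _ Hs0)) as [c Hc]; eauto. }
  exists m; split; auto. intros y Sy Hsp. rewrite rk_unfold in Hm.
  destruct (Hm y (HSX _ Sy) Hsp) as [c [Hc Hr]].
  exact (Hmin c (ex_intro _ y (conj Sy Hr)) Hc).
Qed.

Definition Phi (G : group) (F : family G) (O : wellorder) (b : O) (X : gset G) : Prop :=
  (finite_ord O b -> rank_poset_le (tau_tree F X) O b) /\
  (~ finite_ord O b -> rank_poset_le_succ (tau_tree F X) O b).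

Lemma main_lemma (G : group) (F : family G)
    (HFinv : left_invariant F) (HFlow : lower F) (O : wellorder) :
  forall alpha (A : gset G), tau_iter F O alpha A <-> Phi G F O alpha A.
Proof.
  intro alpha. induction alpha as [alpha IH] using (well_founded_ind (olt_wf O)). intro A.
  unfold Phi.
  destruct (classic (exists b, olt O b alpha)) as [Hpred | Hnopred].
  2: {
    assert (Hmin : forall b, ~ olt O b alpha) by (intros b Hb; eauto).
    assert (Hfin : finite_ord O alpha) by (exists []; intros b Hb; destruct (Hmin b Hb)).
    split.
    - intro H. inversion H; subst.
      + split; [|intro; contradiction]. intros _ x Hx. exfalso.
        exact (tree_empty G F HFlow A x H1 Hx).
      + contradiction.
    - intros [HQ _]. apply tau_iter_zero; auto. specialize (HQ Hfin).
      apply NNPP; intro HnF.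
      destruct (HQ [] (proj2 (tree_nil G F A) HnF)) as [c [Hc _]]. exact (Hmin c Hc). }
  set (Hf := fun B : gset G => exists b, olt O b alpha /\ tau_iter F O b B).
  assert (Hfl : lower Hf).
  { intros B C [b [Hb HB]] HCB. exists b; split; auto.
    exact (proj1 (tau_iter_props G F HFinv HFlow O b) _ _ HB HCB). }
  assert (Hfi : left_invariant Hf).
  { intros B x [b [Hb HB]]. exists b; split; auto.
    exact (proj2 (tau_iter_props G F HFinv HFlow O b) _ _ HB). }
  assert (Hstep : tau_iter F O alpha A <->
    forall z, z <> gone G -> exists b, olt O b alpha /\ Phi G F O b (Az A z)).
  { split.
    - intro H. inversion H; subst.
      + destruct Hpred as [b Hb]. destruct (H0 b Hb).
      + intros z Hz.
        destruct (proj1 (tau_reduce G Hf Hfl Hfi A) H1 z Hz) as [b [Hb Hi]].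
        exists b; split; auto. apply (IH b Hb); auto.
    - intro H. apply tau_iter_pos; auto. apply (proj2 (tau_reduce G Hf Hfl Hfi A)).
      intros z Hz. destruct (H z Hz) as [b [Hb Hphi]]. exists b; split; auto.
      apply (IH b Hb); auto. }
  rewrite Hstep. clear Hstep.
  destruct (classic (finite_ord O alpha)) as [Hfin | Hinf].
  - destruct (max_pred O alpha Hfin Hpred) as [n [Hn Hnmax]].
    split.
    + intros H. split; [|contradiction]. intros _.
      apply (S_Q _ _ _ n); auto. apply (L1 G F HFlow). intros z Hz.
      destruct (H z Hz) as [b [Hb [Hq _]]].
      apply (Q_mono _ _ _ b); auto. apply Hq. exact (finite_pred O alpha b Hfin Hb).
    + intros [HQ _]. specialize (HQ Hfin). intros z Hz.
      destruct (classic (F (Az A z))) as [HF | HnF].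
      * exists n. split; auto. split; intros _ x Hx; exfalso;
          exact (tree_empty G F HFlow _ x HF Hx).
      * assert (Hz0 : tau_tree F A [z]) by (apply tree_cons; split; auto; apply tree_nil; auto).
        destruct (HQ [] (tree_root G F HFlow A _ Hz0)) as [c [Hc Hr]].
        rewrite rk_unfold in Hr.
        destruct (Hr [z] Hz0 (proj2 (sp_nil _ [z]) ltac:(discriminate))) as [c' [Hc' Hr']].
        apply (rk_transfer G F A O z Hz) in Hr'.
        exists c. split; auto. split.
        -- intros _. apply (S_Q _ _ _ c'); auto. apply rk_down; auto.
        -- intros Hnf. exfalso. apply Hnf. exact (finite_pred O alpha c Hfin Hc).
  - assert (Hkey : forall z, z <> gone G ->
      ((exists b, olt O b alpha /\ Phi G F O b (Az A z)) <->
       rank_poset_le (tau_tree F (Az A z)) O alpha)).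
    { intros z Hz. split.
      - intros [b [Hb [Hq Hs]]]. destruct (classic (finite_ord O b)) as [Hbf | Hbi].
        + apply (Q_mono _ _ _ b); auto.
        + apply (S_Q _ _ _ b); auto.
      - intros HQ. destruct (classic (F (Az A z))) as [HF | HnF].
        + destruct Hpred as [b Hb]. exists b. split; auto.
          split; intros _ x Hx; exfalso; exact (tree_empty G F HFlow _ x HF Hx).
        + destruct (HQ [] (proj2 (tree_nil G F _) HnF)) as [c [Hc Hr]].
          apply rk_down in Hr.
          destruct (classic (finite_ord O c)) as [Hcf | Hci].
          * destruct (next_above O c alpha Hcf Hc Hinf) as [b [Hcb Hba]].
            exists b. split; auto. split; intros _.
            -- apply (S_Q _ _ _ c); auto.
            -- apply (S_mono _ _ _ c); auto.
          * exists c. split; auto. split; [intro; contradiction | intros _; auto]. }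
    split.
    + intros H. split; [intro; contradiction|]. intros _. apply (L1 G F HFlow).
      intros z Hz. apply Hkey; auto.
    + intros [_ HS]. specialize (HS Hinf). rewrite (L1 G F HFlow) in HS.
      intros z Hz. apply Hkey; auto.
Qed.

Theorem theorem3p2 (G : group) (F : family G)
    (HFinv : left_invariant F) (HFlow : lower F)
    (A : gset G) (O : wellorder) (alpha : O) :
  tau_iter F O alpha A <->
  (wf_poset (tau_tree F A) /\
   (finite_ord O alpha -> rank_poset_le (tau_tree F A) O alpha) /\
   (~ finite_ord O alpha -> rank_poset_le_succ (tau_tree F A) O alpha)).
Proof.
  split.
  - intro H. apply (main_lemma G F HFinv HFlow O) in H. destruct H as [HQ HS].
    split; [|split; auto]. apply wf_from_rank with O. intros x Hx.
    destruct (classic (finite_ord O alpha)) as [Hf | Hnf].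
    + destruct (HQ Hf x Hx) as [c [_ Hc]]; eauto.
    + exists alpha; apply HS; auto.
  - intros [_ [HQ HS]]. apply (main_lemma G F HFinv HFlow O). split; auto.
Qed.
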